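(* Let $\widehat A=\mathbb{C}[[x,y,z]]$ with maximal ideal $\widehat M=(x,y,z)$, and let $F=(f,g,h)$ be a Poisson triple on $\widehat A$ such that at most one of $f,g,h$ lies in $\widehat M$. Then $F$ is m-exact, i.e. there exist $b,d\in\widehat A$ with $F=b\,\mathrm{grad}(d)=(b d_x,b d_y,b d_z)$.
   Context: $F\in\widehat A^3$ is a Poisson triple if there is a Poisson bracket on $\widehat A$ with $\{y,z\}=f$, $\{z,x\}=g$, $\{x,y\}=h$. Subscripts denote formal partial derivatives. *)

(* Defs.v *)
From HB Require Import structures.
From mathcomp Require Import all_boot all_order all_algebra.
From mathcomp Require Import complex.
From mathcomp Require Import Rstruct.
Set Implicit Arguments. Unset Strict Implicit. Unset Printing Implicit Defensive.
Import Order.TTheory GRing.Theory Num.Theory.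
Local Open Scope ring_scope.

Definition CC := complex Rdefinitions.R.

(* Formal power series in x,y,z over CC: coefficient of x^i y^j z^k. *)
Definition ps := nat -> nat -> nat -> CC.

Definition ps_add (a b : ps) : ps := fun i j k => a i j k + b i j k.
Definition ps_opp (a : ps) : ps := fun i j k => - a i j k.
Definition ps_zero : ps := fun _ _ _ => 0.
Definition ps_mul (a b : ps) : ps := fun i j k =>
  \sum_(p < i.+1) \sum_(q < j.+1) \sum_(r < k.+1)
     a p q r * b (i - p)%N (j - q)%N (k - r)%N.

Definition ps_x : ps := fun i j k => if (i == 1%N) && (j == 0%N) && (k == 0%N) then 1 else 0.
Definition ps_y : ps := fun i j k => if (i == 0%N) && (j == 1%N) && (k == 0%N) then 1 else 0.
Definition ps_z : ps := fun i j k => if (i == 0%N) && (j == 0%N) && (k == 1%N) then 1 else 0.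

Definition ps_dx (a : ps) : ps := fun i j k => a i.+1 j k *+ i.+1.
Definition ps_dy (a : ps) : ps := fun i j k => a i j.+1 k *+ j.+1.
Definition ps_dz (a : ps) : ps := fun i j k => a i j k.+1 *+ k.+1.

Definition in_max (a : ps) : bool := a 0%N 0%N 0%N == 0.

(* A (formal) Poisson bracket on C[[x,y,z]]: an antisymmetric bracket
   satisfying the Jacobi identity, which is a formal biderivation, i.e.
   {a,b} = sum_{u,v} a_u b_v {u,v} over the variables u,v in {x,y,z}
   (equivalently: a C-bilinear, (x,y,z)-adically continuous biderivation). *)
Definition poisson_bracket (br : ps -> ps -> ps) : Prop :=
  [/\ (forall a b, br a b = ps_opp (br b a)),
      (forall a b c, ps_add (br a (br b c)) (ps_add (br b (br c a)) (br c (br a b)))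
                     = ps_zero)
    & (forall a b,
        let vars := [:: (ps_x, ps_dx); (ps_y, ps_dy); (ps_z, ps_dz)] in
        br a b = foldr ps_add ps_zero
          [seq ps_mul (ps_mul (u.2 a) (v.2 b)) (br u.1 v.1) | u <- vars, v <- vars])].

Definition poisson_triple (f g h : ps) : Prop :=
  exists br, poisson_bracket br /\
    [/\ br ps_y ps_z = f, br ps_z ps_x = g & br ps_x ps_y = h].

Definition m_exact (f g h : ps) : Prop :=
  exists b d : ps,
    [/\ f = ps_mul b (ps_dx d), g = ps_mul b (ps_dy d) & h = ps_mul b (ps_dz d)].

(* Main.v *)
Require Import Defs.
From mathcomp Require Import all_boot.
From HB Require Import structures.
From mathcomp Require Import all_order all_algebra complex Rstruct boolp ring.
Set Implicit Arguments. Unset Strict Implicit. Unset Printing Implicit Defensive.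
Import Order.TTheory GRing.Theory Num.Theory.

Module PSer.
Local Open Scope ring_scope.
Definition ser (R : Type) := nat -> R.

Section Srec.
Variable T : Type.
Variable step : nat -> (nat -> T) -> T.
Variable t0 : T.
Hypothesis step_ext : forall n p q, (forall j, (j < n)%N -> p j = q j) -> step n p = step n q.

Fixpoint appr (n : nat) : nat -> T :=
  match n with
  | 0 => fun _ => step 0 (fun _ => t0)
  | n'.+1 => fun i => if i == n'.+1 then step n'.+1 (appr n') else appr n' i
  end.

Lemma appr_stable n i : (i <= n)%N -> appr n i = appr i i.
Proof.
elim: n => [|n IH]; first by rewrite leqn0 => /eqP ->.
rewrite leq_eqVlt => /orP [/eqP -> //| hi] /=.
by rewrite (ltn_eqF hi) IH.
Qed.

Lemma srec : exists b : nat -> T, forall n, b n = step n b.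
Proof.
exists (fun i => appr i i) => [[|n]] /=; first exact: step_ext.
rewrite eqxx; apply: step_ext => j hj; exact: appr_stable.
Qed.
End Srec.

Definition isder (R : comPzRingType) (d : R -> R) :=
  (forall x y, d (x + y) = d x + d y) /\ (forall x y, d (x * y) = d x * y + x * d y).

Section Ser.
Variable R : comPzRingType.
Local Notation S := (ser R).
HB.instance Definition _ := Choice.on S.
Definition sadd (a b : S) : S := fun i => a i + b i.
Definition sopp (a : S) : S := fun i => - a i.
Definition szero : S := fun _ => 0.
Definition smul (a b : S) : S := fun i => \sum_(j < i.+1) a j * b (i - j)%N.
Definition sone : S := fun i => if i == 0%N then 1 else 0.

Fact saddA : associative sadd. Proof. by move=> a b c; apply: funext=> i; rewrite /sadd addrA. Qed.
Fact saddC : commutative sadd. Proof. by move=> a b; apply: funext=> i; rewrite /sadd addrC. Qed.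
Fact sadd0 : left_id szero sadd. Proof. by move=> a; apply: funext=> i; rewrite /sadd add0r. Qed.
Fact saddN : left_inverse szero sopp sadd. Proof. by move=> a; apply: funext=> i; rewrite /sadd addNr. Qed.
HB.instance Definition _ := GRing.isZmodule.Build S saddA saddC sadd0 saddN.

Fact smul_rev a b i : smul a b i = \sum_(j < i.+1) a (i - j)%N * b j.
Proof.
rewrite /smul (reindex_inj rev_ord_inj) /=.
by apply: eq_bigr => j _; rewrite subSS subKn // -ltnS.
Qed.

Fact smulA : associative smul.
Proof.
move=> p q r; apply: funext=> i; rewrite [LHS]/smul [RHS]smul_rev.
transitivity (\sum_(j < i.+1) \sum_(k < i.+1 | (k <= i - j)%N) p j * (q (i - j - k)%N * r k)).
  apply: eq_bigr => /= j _; rewrite smul_rev big_distrr /=.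
  by rewrite (big_ord_narrow_leq (leq_subr _ _)).
rewrite (exchange_big_dep predT) //=; apply: eq_bigr => k _.
transitivity (\sum_(j < i.+1 | (j <= i - k)%N) p j * (q (i - j - k)%N * r k)).
  apply: eq_bigl => j; rewrite -ltnS -(ltnS j) -!subSn ?leq_ord //.
  by rewrite -subn_gt0 -(subn_gt0 j) -!subnDA addnC.
rewrite (big_ord_narrow_leq (leq_subr _ _)) /smul big_distrl /=.
by apply: eq_bigr => j _; rewrite -!subnDA addnC mulrA.
Qed.

Fact smulC : commutative smul.
Proof. by move=> a b; apply: funext=> i; rewrite smul_rev /smul; apply: eq_bigr=> j _; rewrite mulrC. Qed.

Fact smul1 : left_id sone smul.
Proof.
move=> p; apply: funext => i; rewrite /smul big_ord_recl subn0 /sone /= mul1r.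
by rewrite big1 ?addr0 // => j _; rewrite mul0r.
Qed.

Fact smulDl : left_distributive smul sadd.
Proof.
move=> a b c; apply: funext => i; rewrite /smul /sadd -big_split /=.
by apply: eq_bigr => j _; rewrite mulrDl.
Qed.

HB.instance Definition _ := GRing.Zmodule_isComPzRing.Build S smulA smulC smul1 smulDl.

Lemma serD (a b : S) i : (a + b) i = a i + b i. Proof. by []. Qed.
Lemma serN (a : S) i : (- a) i = - a i. Proof. by []. Qed.
Lemma ser0 i : (0 : S) i = 0. Proof. by []. Qed.
Lemma serM (a b : S) i : (a * b) i = \sum_(j < i.+1) a j * b (i - j)%N. Proof. by []. Qed.
Lemma ser1 i : (1 : S) i = if i == 0%N then 1 else 0. Proof. by []. Qed.
Lemma serB (a b : S) i : (a - b) i = a i - b i. Proof. by []. Qed.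
Lemma serMn (a : S) n i : (a *+ n) i = a i *+ n.
Proof. by elim: n => [|n IH]; rewrite ?mulr0n // !mulrS serD IH. Qed.
Lemma serM0 (a b : S) : (a * b) 0%N = a 0%N * b 0%N.
Proof. by rewrite serM big_ord_recl big_ord0 addr0. Qed.
Lemma ser_sum I (r : seq I) (P : pred I) (F : I -> S) i :
  (\sum_(j <- r | P j) F j) i = \sum_(j <- r | P j) F j i.
Proof. by elim/big_rec2: _ => // j x y _ <-. Qed.

Definition sD (a : S) : S := fun i => a i.+1 *+ i.+1.
Definition slift (d : R -> R) (a : S) : S := fun i => d (a i).

Lemma sDD a b : sD (a + b) = sD a + sD b.
Proof. by apply: funext => i; rewrite /sD !serD mulrnDl. Qed.
Lemma sDN a : sD (- a) = - sD a.
Proof. by apply: funext => i; rewrite /sD !serN mulNrn. Qed.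
Lemma sDB a b : sD (a - b) = sD a - sD b.
Proof. by rewrite sDD sDN. Qed.

Lemma sDM a b : sD (a * b) = sD a * b + a * sD b.
Proof.
apply: funext => i; rewrite serD !serM /sD serM.
transitivity (\sum_(j < i.+2) (a j * b (i.+1 - j)%N *+ j) +
              \sum_(j < i.+2) (a j * b (i.+1 - j)%N *+ (i.+1 - j))).
  rewrite -big_split /= -sumrMnl; apply: eq_bigr => j _.
  by rewrite -mulrnDr subnKC //; exact: ltn_ord j.
congr (_ + _).
  rewrite big_ord_recl /= mulr0n add0r; apply: eq_bigr => j _.
  by rewrite /bump /= add1n subSS mulrnAl.
rewrite big_ord_recr /= subnn mulr0n addr0; apply: eq_bigr => j _.
by rewrite subSn ?mulrnAr // -ltnS ltn_ord.
Qed.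

Lemma sD1 : sD 1 = 0.
Proof. by apply: funext => i; rewrite /sD ser1 /= mul0rn. Qed.

Section Lift.
Variable d : R -> R.
Hypothesis dD : forall x y, d (x + y) = d x + d y.
Hypothesis dM : forall x y, d (x * y) = d x * y + x * d y.

Lemma d0 : d 0 = 0.
Proof. by apply: (addrI (d 0)); rewrite -dD !addr0. Qed.
Lemma dN x : d (- x) = - d x.
Proof. by apply: (addrI (d x)); rewrite -dD !subrr d0. Qed.
Lemma dMn x n : d (x *+ n) = d x *+ n.
Proof. by elim: n => [|n IH]; rewrite ?mulr0n ?d0 // !mulrS dD IH. Qed.
Lemma d_sum I (r : seq I) (P : pred I) (F : I -> R) :
  d (\sum_(j <- r | P j) F j) = \sum_(j <- r | P j) d (F j).
Proof. by elim/big_rec2: _ => [|j x y _ <-]; rewrite ?d0 ?dD. Qed.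

Lemma sliftD a b : slift d (a + b) = slift d a + slift d b.
Proof. by apply: funext => i; rewrite /slift !serD dD. Qed.
Lemma sliftM a b : slift d (a * b) = slift d a * b + a * slift d b.
Proof.
apply: funext => i; rewrite /slift serD !serM d_sum -big_split /=.
by apply: eq_bigr => j _; rewrite dM.
Qed.
Lemma sD_slift a : sD (slift d a) = slift d (sD a).
Proof. by apply: funext => i; rewrite /sD /slift dMn. Qed.
End Lift.


Lemma serMr0 (a b : S) n : (forall j, (j <= n)%N -> b j = 0) -> (a * b) n = 0.
Proof.
by move=> hb; rewrite serM big1 // => j _; rewrite hb ?mulr0 // leq_subr.
Qed.

Lemma ser_inv (a : S) c : c * a 0%N = 1 -> exists b : S, b * a = 1.
Proof.
move=> hc.
pose step (n : nat) (p : nat -> R) : R :=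
  if n is n'.+1 then - c * \sum_(j < n) p j * a (n - j)%N else c.
have [b hb] : exists b : nat -> R, forall n, b n = step n b.
  apply: (@srec R step 0) => -[|n] p q hpq //=; congr (_ * _); apply: eq_bigr => j _.
  by rewrite hpq.
exists b; apply: funext => n; rewrite serM ser1.
case: n => [|n]; first by rewrite big_ord_recl big_ord0 addr0 hb /= subn0.
rewrite big_ord_recr /= subnn hb /=.
set s := \sum_(_ < _) _.
by rewrite mulrAC mulNr hc mulN1r subrr.
Qed.

Section ODE.
Variable d : R -> R.
Variable dv : nat -> R -> R.
Hypothesis dvK : forall n r, dv n r *+ n.+1 = r.

Lemma ode_exists (Q : S) (e : R) :
  exists y : S, y 0%N = e /\ sD y = Q * slift d y.
Proof.
pose step (n : nat) (p : nat -> R) : R :=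
  if n is n'.+1 then dv n' (\sum_(j < n) Q j * d (p (n' - j)%N)) else e.
have [y hy] : exists b : nat -> R, forall n, b n = step n b.
  apply: (@srec R step 0) => -[|n] p q hpq //=; congr (dv _ _); apply: eq_bigr => j _.
  by rewrite hpq // ltnS leq_subr.
exists y; split; first by rewrite hy.
by apply: funext => n; rewrite /sD hy /= dvK serM.
Qed.

Hypothesis d0 : d 0 = 0.
Hypothesis tf : forall (r : R) n, r *+ n.+1 = 0 -> r = 0.

Lemma ode_unique (Q E : S) : E 0%N = 0 -> sD E = Q * slift d E -> E = 0.
Proof.
move=> h0 hE.
suff H : forall n i, (i <= n)%N -> E i = 0.
  by apply: funext => i; rewrite (H i i).
elim=> [|n IH] i; first by rewrite leqn0 => /eqP ->.
rewrite leq_eqVlt => /orP [/eqP -> | ]; last exact: IH.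
apply: (tf (n := n)).
have := congr1 (fun u => u n) hE; rewrite /sD /= => ->.
apply: serMr0 => j hj; rewrite /slift IH // d0.
Qed.
End ODE.

Lemma sD_der : isder sD.
Proof. split; [exact: sDD | exact: sDM]. Qed.

Lemma tf_ser : (forall (r : R) n, r *+ n.+1 = 0 -> r = 0) ->
  forall (r : S) n, r *+ n.+1 = 0 -> r = 0.
Proof.
move=> tf r n h; apply: funext => i; apply: (tf _ n).
by rewrite -serMn h.
Qed.
Definition dv_ser (dv : nat -> R -> R) : nat -> S -> S := fun n r i => dv n (r i).
Lemma dv_serK dv : (forall n r, dv n r *+ n.+1 = r) ->
  forall n (r : S), dv_ser dv n r *+ n.+1 = r.
Proof. by move=> h n r; apply: funext => i; rewrite serMn /dv_ser h. Qed.
Lemma slift0 (d : R -> R) : d 0 = 0 -> slift d 0 = 0.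
Proof. by move=> h; apply: funext => i; rewrite /slift ser0 h. Qed.
Lemma slift_comm (d1 d2 : R -> R) a : (forall x, d1 (d2 x) = d2 (d1 x)) ->
  slift d1 (slift d2 a) = slift d2 (slift d1 a).
Proof. by move=> h; apply: funext => i; rewrite /slift h. Qed.
Lemma sliftM0 (d : R -> R) a : (slift d a) 0%N = d (a 0%N). Proof. by []. Qed.
End Ser.

Lemma slift_der (R : comPzRingType) (d : R -> R) : isder d -> isder (slift d).
Proof. by move=> [h1 h2]; split; [exact: sliftD | exact: sliftM]. Qed.

Section DerTh.
Variable R : comPzRingType.
Variable d : R -> R.
Hypothesis hd : isder d.
Lemma der0 : d 0 = 0.
Proof. by case: hd => h _; apply: (addrI (d 0)); rewrite -h !addr0. Qed.
Lemma derD x y : d (x + y) = d x + d y. Proof. by case: hd. Qed.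
Lemma derM x y : d (x * y) = d x * y + x * d y. Proof. by case: hd. Qed.
Lemma derN x : d (- x) = - d x.
Proof. by apply: (addrI (d x)); rewrite -derD !subrr der0. Qed.
Lemma derB x y : d (x - y) = d x - d y. Proof. by rewrite derD derN. Qed.
Lemma der1 : d 1 = 0.
Proof. have h := derM 1 1; rewrite !mulr1 !mul1r in h. by apply: (addrI (d 1)); rewrite addr0 -h. Qed.
End DerTh.

Goal forall (R : comPzRingType) (a b : ser R), a * b - b * a = 0.
move=> R a b. ring. Qed.

Definition T1 := ser CC.
Definition T2 := ser T1.
Definition T3 := ser T2.

Lemma tfC (r : CC) n : r *+ n.+1 = 0 -> r = 0.
Proof. by move/eqP; rewrite mulrn_eq0 /= => /eqP. Qed.
Definition dvC (n : nat) (r : CC) : CC := r / n.+1%:R.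
Lemma dvCK n r : dvC n r *+ n.+1 = r.
Proof. by rewrite /dvC -[LHS]mulr_natr divfK // pnatr_eq0. Qed.
Definition Dx : T3 -> T3 := @sD T2.
Definition Dy : T3 -> T3 := slift (@sD T1).
Definition Dz : T3 -> T3 := slift (slift (@sD CC)).
Lemma Dx_der : isder Dx. Proof. exact: sD_der. Qed.
Lemma Dy_der : isder Dy. Proof. exact/slift_der/sD_der. Qed.
Lemma Dz_der : isder Dz. Proof. exact/slift_der/slift_der/sD_der. Qed.

Lemma DxDy a : Dx (Dy a) = Dy (Dx a).
Proof. by rewrite /Dx /Dy sD_slift //; case: (@sD_der T1). Qed.
Lemma DxDz a : Dx (Dz a) = Dz (Dx a).
Proof. by rewrite /Dx /Dz sD_slift //; case: (slift_der (@sD_der CC)). Qed.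
Lemma DyDz a : Dy (Dz a) = Dz (Dy a).
Proof. rewrite /Dy /Dz slift_comm // => x; rewrite sD_slift //; by case: (@sD_der CC). Qed.

Lemma psE_add (a b : ps) : ps_add a b = (a : T3) + b. Proof. by []. Qed.
Lemma psE_opp (a : ps) : ps_opp a = - (a : T3). Proof. by []. Qed.
Lemma psE_zero : ps_zero = (0 : T3). Proof. by []. Qed.
Lemma psE_mul (a b : ps) : ps_mul a b = (a : T3) * b.
Proof.
apply: funext => i; apply: funext => j; apply: funext => k.
rewrite /ps_mul serM !ser_sum; apply: eq_bigr => p _.
rewrite serM !ser_sum; apply: eq_bigr => q _.
by rewrite serM.
Qed.
Lemma psE_dx (a : ps) : ps_dx a = Dx a.
Proof. by apply: funext => i; apply: funext => j; apply: funext => k; rewrite /Dx /sD !serMn. Qed.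
Lemma psE_dy (a : ps) : ps_dy a = Dy a.
Proof. by apply: funext => i; apply: funext => j; apply: funext => k; rewrite /Dy /slift /sD !serMn. Qed.
Lemma psE_dz (a : ps) : ps_dz a = Dz a.
Proof. by []. Qed.
Lemma one3 i j k : (1 : T3) i j k = if (i == 0%N) && (j == 0%N) && (k == 0%N) then 1 else 0.
Proof. by rewrite ser1; case: i => [|i] /=; rewrite ?ser1 ?ser0; case: j => [|j] /=; rewrite ?ser1 ?ser0. Qed.

Ltac dvar := apply: funext => -[|?]; apply: funext => -[|?]; apply: funext => -[|?];
  rewrite ?one3 /ps_dx /ps_dy /ps_dz /ps_x /ps_y /ps_z /= ?mul0rn ?andbF //; rewrite ?andFb ?andbF /= ?mul0rn //.

Lemma dxx : Dx ps_x = 1. Proof. rewrite -psE_dx. dvar. Qed.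
Lemma dyx : Dy ps_x = 0. Proof. rewrite -psE_dy. dvar. Qed.
Lemma dzx : Dz ps_x = 0. Proof. rewrite -psE_dz. dvar. Qed.
Lemma dxy : Dx ps_y = 0. Proof. rewrite -psE_dx. dvar. Qed.
Lemma dyy : Dy ps_y = 1. Proof. rewrite -psE_dy. dvar. Qed.
Lemma dzy : Dz ps_y = 0. Proof. rewrite -psE_dz. dvar. Qed.
Lemma dxz : Dx ps_z = 0. Proof. rewrite -psE_dx. dvar. Qed.
Lemma dyz : Dy ps_z = 0. Proof. rewrite -psE_dy. dvar. Qed.
Lemma dzz : Dz ps_z = 1. Proof. rewrite -psE_dz. dvar. Qed.
Lemma tf3 (r : T3) n : r *+ n.+1 = 0 -> r = 0.
Proof. exact/tf_ser/tf_ser/tf_ser/tfC. Qed.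

Lemma bider_expand (br : ps -> ps -> ps) (a b : ps) :
  (forall a b,
        let vars := [:: (ps_x, ps_dx); (ps_y, ps_dy); (ps_z, ps_dz)] in
        br a b = foldr ps_add ps_zero
          [seq ps_mul (ps_mul (u.2 a) (v.2 b)) (br u.1 v.1) | u <- vars, v <- vars]) ->
  (br a b : T3) =
   Dx a * Dx b * br ps_x ps_x + Dx a * Dy b * br ps_x ps_y + Dx a * Dz b * br ps_x ps_z +
   Dy a * Dx b * br ps_y ps_x + Dy a * Dy b * br ps_y ps_y + Dy a * Dz b * br ps_y ps_z +
   Dz a * Dx b * br ps_z ps_x + Dz a * Dy b * br ps_z ps_y + Dz a * Dz b * br ps_z ps_z.
Proof.
move=> H; rewrite H /= !psE_add !psE_mul !psE_zero !psE_dx !psE_dy !psE_dz.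
ring.
Qed.
Lemma triple_J (f g h : ps) : poisson_triple f g h ->
  (f : T3) * (Dz g - Dy h) + (g : T3) * (Dx h - Dz f) + (h : T3) * (Dy f - Dx g) = 0.
Proof.
case=> br [[anti jac bider] [hf hg hh]].
have E := bider_expand _ _ bider.
have Z a : (br a a : T3) = 0.
  apply: (@tf3 _ 1); rewrite mulr2n; apply/eqP; rewrite addr_eq0; apply/eqP.
  exact: (anti a a).
have A a b : (br a b : T3) = - (br b a : T3) by exact: anti.
have J := jac ps_x ps_y ps_z.
rewrite hf hg hh !psE_add psE_zero in J.
rewrite (E ps_x f) (E ps_y g) (E ps_z h) in J.
rewrite !Z (A ps_y ps_x) (A ps_z ps_y) (A ps_x ps_z) hf hg hh in J.
rewrite dxx dyx dzx dxy dyy dzy dxz dyz dzz in J.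
rewrite -[RHS]J; ring.
Qed.
Definition dv1 : nat -> T1 -> T1 := dv_ser dvC.
Definition dv2 : nat -> T2 -> T2 := dv_ser dv1.
Lemma dv1K n r : dv1 n r *+ n.+1 = r. Proof. exact/dv_serK/dvCK. Qed.
Lemma dv2K n r : dv2 n r *+ n.+1 = r. Proof. exact/dv_serK/dv1K. Qed.
Definition z1 : T1 := fun k => if k == 1%N then 1 else 0.

Lemma main3 (f g h hi : T3) : hi * h = 1 ->
  f * (Dz g - Dy h) + g * (Dx h - Dz f) + h * (Dy f - Dx g) = 0 ->
  exists b d : T3, [/\ f = b * Dx d, g = b * Dy d & h = b * Dz d].
Proof.
move=> hih HJ.
have hfP : f = (f * hi) * h by rewrite -mulrA hih mulr1.
have hgQ : g = (g * hi) * h by rewrite -mulrA hih mulr1.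
move: hfP hgQ; set P := f * hi; set Q := g * hi; clearbody P Q => hfP hgQ.
rewrite hfP hgQ in HJ.
rewrite !(derM Dz_der) !(derM Dy_der) !(derM Dx_der) in HJ.
have HK : Dy P - Dx Q + P * Dz Q - Q * Dz P = 0.
  have H2 : h * h * (Dy P - Dx Q + P * Dz Q - Q * Dz P) = 0 by rewrite -[RHS]HJ; ring.
  have E1 : hi * hi * (h * h * (Dy P - Dx Q + P * Dz Q - Q * Dz P)) =
            (hi * h) * (hi * h) * (Dy P - Dx Q + P * Dz Q - Q * Dz P) by ring.
  by rewrite hih !mul1r H2 mulr0 in E1.
have [e [he0 he]] := ode_exists (@sD CC) dv1K (Q 0%N) z1.
have [d [hd0 hd]] := ode_exists (slift (@sD CC)) dv2K P e.
have hx : Dx d = P * Dz d by exact: hd.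
pose E := Dy d - Q * Dz d.
have HE : E = 0.
  apply: (ode_unique (der0 (slift_der (@sD_der CC))) (tf_ser (tf_ser tfC)) (Q := P)).
    rewrite /E serB serM0 /Dy /Dz !sliftM0 hd0 he; ring.
  have -> : sD E = Dx E by [].
  have -> : slift (slift (@sD CC)) E = Dz E by [].
  apply/eqP; rewrite -subr_eq0; apply/eqP.
  rewrite /E (derB Dx_der) (derM Dx_der) DxDy DxDz hx (derM Dy_der) (derM Dz_der) DyDz.
  rewrite (derB Dz_der) (derM Dz_der).
  transitivity (Dz d * (Dy P - Dx Q + P * Dz Q - Q * Dz P)); first ring.
  by rewrite HK mulr0.
have hy : Dy d = Q * Dz d by apply/eqP; rewrite -subr_eq0; apply/eqP.
have hc : 1 * (((Dz d) 0%N) 0%N) 0%N = 1.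
  by rewrite mul1r /Dz /slift /sD hd0 he0 /z1 /=.
have [b1 hb1] := ser_inv hc.
have [b2 hb2] := @ser_inv T1 ((Dz d) 0%N) b1 hb1.
have [b3 hb3] := @ser_inv T2 (Dz d) b2 hb2.
exists (h * b3), d; split.
- rewrite hx {1}hfP; transitivity (P * h * (b3 * Dz d)); first by rewrite hb3 mulr1.
  ring.
- rewrite hy {1}hgQ; transitivity (Q * h * (b3 * Dz d)); first by rewrite hb3 mulr1.
  ring.
- by rewrite -mulrA hb3 mulr1.
Qed.
Definition sig (a : T3) : T3 := fun i j k => a k j i.
Lemma sigK a : sig (sig a) = a. Proof. by []. Qed.
Lemma sigD a b : sig (a + b) = sig a + sig b. Proof. by []. Qed.
Lemma sigN a : sig (- a) = - sig a. Proof. by []. Qed.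
Lemma sigB a b : sig (a - b) = sig a - sig b. Proof. by []. Qed.
Lemma sig0 : sig 0 = 0. Proof. by []. Qed.
Lemma sigM a b : sig (a * b) = sig a * sig b.
Proof.
rewrite -!psE_mul; apply: funext => i; apply: funext => j; apply: funext => k.
rewrite /ps_mul /sig.
under eq_bigr => p _ do rewrite exchange_big.
rewrite exchange_big.
under eq_bigr => r _ do rewrite exchange_big.
by [].
Qed.
Lemma sDx a : Dx (sig a) = sig (Dz a).
Proof. by rewrite -psE_dx -psE_dz. Qed.
Lemma sDy a : Dy (sig a) = sig (Dy a).
Proof. rewrite -!psE_dy; by []. Qed.
Lemma sDz a : Dz (sig a) = sig (Dx a).
Proof. by rewrite -psE_dx -psE_dz. Qed.
Lemma unit3 (a : T3) : a 0%N 0%N 0%N != 0 -> exists ai : T3, ai * a = 1.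
Proof.
move=> ha.
have hc : (a 0%N 0%N 0%N)^-1 * (a 0%N 0%N) 0%N = 1 by rewrite mulVf.
have [b1 hb1] := ser_inv hc.
have [b2 hb2] := @ser_inv T1 (a 0%N) b1 hb1.
exact: (@ser_inv T2 a b2 hb2).
Qed.

Lemma mex (f g h b d : T3) : [/\ f = b * Dx d, g = b * Dy d & h = b * Dz d] -> m_exact f g h.
Proof. by case=> hf hg hh; exists b, d; rewrite !psE_mul psE_dx psE_dy psE_dz. Qed.

Lemma final (f g h : ps) :
  poisson_triple f g h ->
  (in_max f + in_max g + in_max h <= 1)%N ->
  m_exact f g h.
Proof.
move=> PT hm; have HJ := triple_J PT.
case Hh: (in_max h).
  have Hf : in_max f = false by move: hm; rewrite Hh; case: (in_max f); case: (in_max g).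
  have [fi hfi] : exists fi : T3, fi * sig f = 1.
    by apply: unit3; apply/negbT; exact: Hf.
  have HJ' : sig h * (Dz (sig g) - Dy (sig f)) + sig g * (Dx (sig f) - Dz (sig h))
     + sig f * (Dy (sig h) - Dx (sig g)) = 0.
    have := congr1 sig HJ; rewrite sig0 !sigD !sigM !sigB => H.
    rewrite (sDz g) (sDy f) (sDx f) (sDz h) (sDy h) (sDx g) -[RHS]oppr0 -H; ring.
  have [b [d [e1 e2 e3]]] := main3 hfi HJ'.
  apply: (@mex _ _ _ (sig b) (sig d)); split.
  - by rewrite -[f : T3]sigK e3 sigM sDx.
  - by rewrite -[g : T3]sigK e2 sigM sDy.
  - by rewrite -[h : T3]sigK e1 sigM sDz.
have [hi hhi] := unit3 (negbT Hh).
have [b [d H]] := main3 hhi HJ.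
exact: mex H.
Qed.

End PSer.

Unset Implicit Arguments.

Theorem lemma2p3 (f g h : ps) :
  poisson_triple f g h ->
  (in_max f + in_max g + in_max h <= 1)%N ->
  m_exact f g h.
Proof. exact: PSer.final. Qed.
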